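(* Let $X$ be a complex Banach space, $\mathcal{F}$ an algebra with unit, $\Phi:\mathcal{F}\to\mathcal{C}(X)$ a proto-calculus, $\mathcal{B}:=\{b\in\mathcal{F}:\Phi(b)\in\mathcal{L}(X)\}$, and let $(\mathcal{F}',\Phi')$ be the dual calculus associated with $\Phi$. Let $f\in\mathcal{F}'$ and $$D_f:=\mathrm{span}\{\Phi(e)x: x\in X,\ e\in\mathcal{B},\ fe\in\mathcal{B}\}.$$ Then: (a) $D_f$ is dense in $X$ and $D_f\subseteq\mathrm{dom}(\Phi(f))$; in particular $\Phi(f)$ is densely defined. (b) $\Phi(f)'\subseteq\Phi'(f)$, with equality if and only if $D_f$ is a core for $\Phi(f)$. (c) $\Phi(f)$ is bounded if and only if $\Phi'(f)$ is bounded; in this case $\Phi'(f)=\Phi(f)'$.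
   Context: $\mathcal{F}$ need not be commutative. $\mathcal{L}(X)$, $\mathcal{C}(X)$: bounded, resp. closed linear operators; operator inclusions are graph inclusions, sums/products have natural domains, ''$Tx=y$'' means $x\in\mathrm{dom}(T)$, $Tx=y$; $T'$ denotes the Banach space adjoint of an operator $T$ on $X$ (acting on the dual space $X'$). A proto-calculus is a map $\Phi:\mathcal{F}\to\mathcal{C}(X)$ with (FC1) $\Phi(\mathbf{1})=I$; (FC2) $\lambda\Phi(f)\subseteq\Phi(\lambda f)$, $\Phi(f)+\Phi(g)\subseteq\Phi(f+g)$; (FC3) $\Phi(f)\Phi(g)\subseteq\Phi(fg)$, $\mathrm{dom}(\Phi(f)\Phi(g))=\mathrm{dom}(\Phi(g))\cap\mathrm{dom}(\Phi(fg))$. Dual calculus: $\mathcal{B}$ is a unital subalgebra and $b\mapsto\Phi(b)'$ is a homomorphism from $\mathcal{B}$ with the opposite multiplication $f\cdot_{\mathrm{op}}g=gf$ into $\mathcal{L}(X')$. Let $\mathcal{F}'$ be the set of $f\in\mathcal{F}$ such that for every $d\in\mathcal{B}$ one has $\bigcap\{\ker\Phi(e)': e\in\mathcal{B},\ fde\in\mathcal{B}\}=\{0\}$ (with this set of $e$ nonempty). For $f\in\mathcal{F}'$ the operator $\Phi'(f)$ on $X'$ is defined by: $\Phi'(f)x'=y'$ iff $\Phi(fe)'x'=\Phi(e)'y'$ for all $e\in\mathcal{B}$ with $fe\in\mathcal{B}$. (This $\Phi'$ is a calculus on $\mathcal{F}'$ with the opposite multiplication and extends $b\mapsto\Phi(b)'$.)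 A subspace $D\subseteq\mathrm{dom}(T)$ is a core for a closed operator $T$ if the closure of $T|_D$ is $T$. *)

(* Defs.v *)
From HB Require Import structures.
From mathcomp Require Import all_boot all_order all_algebra.
From mathcomp Require Import all_classical all_reals all_analysis.
From mathcomp Require Import complex.
Import numFieldNormedType.Exports.
Set Implicit Arguments. Unset Strict Implicit. Unset Printing Implicit Defensive.
Import Order.TTheory GRing.Theory Num.Theory.
Local Open Scope ring_scope.
Local Open Scope classical_set_scope.
Local Open Scope complex_scope.

(* Linear (possibly unbounded) operators on a space V are represented by their
   graphs  G : set (V * V);  "T x = y" is  G (x, y).                         *)

Section Operators.
Variable R : realType.
Variable X : completeNormedModType R[i].

Definition op_dom (G : set (X * X)) : set X := [set x | exists y, G (x, y)].

Definition linear_op (G : set (X * X)) : Prop :=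
  [/\ G (0, 0),
      (forall x y u v, G (x, y) -> G (u, v) -> G (x + u, y + v)),
      (forall (c : R[i]) x y, G (x, y) -> G (c *: x, c *: y)) &
      (forall x y z, G (x, y) -> G (x, z) -> y = z)].

Definition closed_op (G : set (X * X)) : Prop := linear_op G /\ closed G.

Definition bounded_op (G : set (X * X)) : Prop :=
  [/\ linear_op G, op_dom G = setT &
      exists M : R, forall x y, G (x, y) -> `|y| <= M%:C * `|x|].

Definition proto_calculus (F : algType R[i]) (Phi : F -> set (X * X)) : Prop :=
  (forall f, closed_op (Phi f)) /\
  Phi 1 = [set p | p.2 = p.1] /\
  (forall (c : R[i]) f x y, Phi f (x, y) -> Phi (c *: f) (x, c *: y)) /\
  (forall f g x y z, Phi f (x, y) -> Phi g (x, z) -> Phi (f + g) (x, y + z)) /\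
  (forall f g x y z, Phi g (x, y) -> Phi f (y, z) -> Phi (f * g) (x, z)) /\
  (* FC3: dom (Phi f Phi g) = dom (Phi g) ∩ dom (Phi (f g)) *)
  (forall f g x y, Phi g (x, y) -> op_dom (Phi (f * g)) x -> op_dom (Phi f) y).

Definition Bset (F : algType R[i]) (Phi : F -> set (X * X)) : set F :=
  [set b | bounded_op (Phi b)].

Definition dual_norm_le (x' : X -> R[i]) (c : R) : Prop :=
  forall x, `|x' x| <= c%:C * `|x|.

Definition dualp (x' : X -> R[i]) : Prop :=
  (forall (c : R[i]) x y, x' (c *: x + y) = c * x' x + x' y) /\
  exists c : R, dual_norm_le x' c.

Definition dual_op_dom (G : set ((X -> R[i]) * (X -> R[i]))) : set (X -> R[i]) :=
  [set x' | exists y', G (x', y')].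

Definition dual_bounded_op (G : set ((X -> R[i]) * (X -> R[i]))) : Prop :=
  [/\ (forall x' y', G (x', y') -> dualp x' /\ dualp y'),
      (forall x', dualp x' -> dual_op_dom G x'),
      (forall x' y1 y2, G (x', y1) -> G (x', y2) -> y1 = y2),
      (forall x' y' u' v' (c : R[i]), G (x', y') -> G (u', v') ->
          G (fun x => c * x' x + u' x, fun x => c * y' x + v' x)) &
      exists M : R, forall x' y' c, G (x', y') -> dual_norm_le x' c ->
          dual_norm_le y' (M * c)].

Definition adjoint (G : set (X * X)) : set ((X -> R[i]) * (X -> R[i])) :=
  [set p | dualp p.1 /\ dualp p.2 /\ forall x y, G (x, y) -> p.1 y = p.2 x].

(* kernel of Phi(e)' for bounded Phi(e) *)
Definition adj_ker (G : set (X * X)) : set (X -> R[i]) :=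
  [set x' | dualp x' /\ forall x y, G (x, y) -> x' y = 0].

Definition Fdual (F : algType R[i]) (Phi : F -> set (X * X)) : set F :=
  [set f | forall d, Bset Phi d ->
     (exists e, Bset Phi e /\ Bset Phi (f * d * e)) /\
     (forall x', (forall e, Bset Phi e -> Bset Phi (f * d * e) -> adj_ker (Phi e) x') ->
        forall x, x' x = 0)].

(* Phi'(f) : Phi'(f) x' = y' iff Phi(f e)' x' = Phi(e)' y' for all
   e ∈ B with f e ∈ B. *)
Definition Phi_dual (F : algType R[i]) (Phi : F -> set (X * X)) (f : F) :
    set ((X -> R[i]) * (X -> R[i])) :=
  [set p | dualp p.1 /\ dualp p.2 /\
     forall e, Bset Phi e -> Bset Phi (f * e) ->
       forall x u v, Phi (f * e) (x, u) -> Phi e (x, v) -> p.1 u = p.2 v].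

Definition span (S : set X) : set X :=
  [set v | exists s : seq (R[i] * X),
      (forall p, p \in s -> S p.2) /\ v = \sum_(p <- s) p.1 *: p.2].

Definition Dset (F : algType R[i]) (Phi : F -> set (X * X)) (f : F) : set X :=
  span [set y | exists x e, Bset Phi e /\ Bset Phi (f * e) /\ Phi e (x, y)].

Definition core (D : set X) (G : set (X * X)) : Prop :=
  D `<=` op_dom G /\ closure [set p | G p /\ D p.1] = G.

End Operators.

(* Main.v *)
Require Import Defs.
From HB Require Import structures.
From mathcomp Require Import all_boot all_order all_algebra.
From mathcomp Require Import all_classical all_reals all_analysis.
From mathcomp Require Import complex.
From mathcomp.algebra_tactics Require Import ring lra.
Require Import Defs.
Import Order.TTheory GRing.Theory Num.Theory.
Import numFieldNormedType.Exports.
Set Implicit Arguments. Unset Strict Implicit. Unset Printing Implicit Defensive.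
Local Open Scope ring_scope.
Local Open Scope classical_set_scope.
Local Open Scope complex_scope.

Section HBr.
Variable R : realType.
Variable V : lmodType R[i].
Variable p : V -> R.
Hypothesis hpD : forall u v, p (u + v) <= p u + p v.
Hypothesis hpZ : forall (c : R[i]) v, (p (c *: v))%:C = `|c| * (p v)%:C.

Lemma hb_p0 : p 0 = 0.
Proof.
have := hpZ 0 0; rewrite scale0r normr0 mul0r => /complexI; done.
Qed.

Lemma hb_pZr r v : 0 <= r -> p (r%:C *: v) = r * p v.
Proof.
move=> r0; apply: complexI; rewrite hpZ rmorphM /=; congr (_ * _).
by apply: ger0_norm; rewrite ler0c.
Qed.

Lemma hb_pN v : p (- v) = p v.
Proof.
apply: complexI; rewrite -scaleN1r hpZ normrN normr1 mul1r; done.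
Qed.

Lemma hb_pge0 v : 0 <= p v.
Proof.
have := hpD v (- v); rewrite subrr hb_p0 hb_pN => h.
lra.
Qed.

Lemma sDr (r s : R) (u : V) : r%:C *: u + s%:C *: u = (r + s)%:C *: u.
Proof. by rewrite rmorphD scalerDl. Qed.

Lemma sMr (r s : R) (u : V) : r%:C *: (s%:C *: u) = (r * s)%:C *: u.
Proof. by rewrite scalerA rmorphM. Qed.

Lemma sKr (r : R) (u : V) : r != 0 -> r%:C *: (r^-1%:C *: u) = u.
Proof. by move=> r0; rewrite sMr mulfV // scale1r. Qed.

Lemma s1r (u : V) : (1 : R)%:C *: u = u.
Proof. by rewrite scale1r. Qed.

Lemma s0r (u : V) : (0 : R)%:C *: u = 0.
Proof. by rewrite scale0r. Qed.

Variable M : set V.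
Hypothesis M0 : M 0.
Hypothesis MD : forall u v, M u -> M v -> M (u + v).
Hypothesis MZ : forall (c : R[i]) u, M u -> M (c *: u).
Variable x0 : V.
Variable delta : R.
Hypothesis delta0 : 0 < delta.
Hypothesis hdist : forall m, M m -> delta <= p (x0 - m).

Definition Good (A : set (V * R)) : Prop :=
  [/\ (forall m t, M m -> A (m + t%:C *: x0, t * delta)),
      (forall u a v b, A (u, a) -> A (v, b) -> A (u + v, a + b)),
      (forall r u a, A (u, a) -> A (r%:C *: u, r * a)),
      (forall u a b, A (u, a) -> A (u, b) -> a = b) &
      (forall u a, A (u, a) -> a <= p u)].

Lemma Good00 A : Good A -> A (0, 0).
Proof.
case=> hG _ _ _ _; have := hG 0 0 M0; by rewrite scale0r addr0 mul0r.
Qed.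

Lemma GoodB A u a v b : Good A -> A (u, a) -> A (v, b) -> A (u - v, a - b).
Proof.
move=> gA hu hv; case: (gA) => _ hD hZ _ _.
have := hD _ _ _ _ hu (hZ (-1) _ _ hv).
by rewrite rmorphN rmorph1 scaleN1r mulN1r.
Qed.

Definition G0 : set (V * R) :=
  [set q | exists m t, M m /\ q = (m + t%:C *: x0, t * delta)].

Lemma Good_G0 : Good G0.
Proof.
split.
- by move=> m t Mm; exists m, t.
- move=> u a v b [m [t [Mm [-> ->]]]] [m' [t' [Mm' [-> ->]]]].
  exists (m + m'), (t + t'); split; first exact: MD.
  by rewrite -sDr mulrDl addrACA.
- move=> r u a [m [t [Mm [-> ->]]]]; exists (r%:C *: m), (r * t); split; first exact: MZ.
  by rewrite scalerDr sMr mulrA.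
- move=> u a b [m [t [Mm [-> ->]]]] [m' [t' [Mm' [e ->]]]].
  have [->//|ntt] := eqVneq t t'.
  exfalso.
  have e2 : (t - t')%:C *: x0 = m' - m.
    by rewrite rmorphB scalerBl -[t%:C *: x0](addKr m) e addrA addrK addrC.
  have Mx : M x0.
    have : M ((t - t')^-1%:C *: (m' - m)) by apply: MZ; apply: MD => //; rewrite -scaleN1r; apply: MZ.
    by rewrite -e2 sMr mulVf ?subr_eq0 // scale1r.
  have := hdist Mx; rewrite subrr hb_p0 => h; have := delta0; lra.
- move=> u a [m [t [Mm [-> ->]]]].
  have [t0|t0] : t <= 0 \/ 0 < t by case: (lerP t 0); auto.
    have := hb_pge0 (m + t%:C *: x0); have : t * delta <= 0 by rewrite mulr_le0_ge0 // ltW.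
    move=> h1 h2; lra.
  have Mm' : M (- (t^-1%:C *: m)) by rewrite -scaleN1r; apply: MZ; apply: MZ.
  have := hdist Mm'; rewrite opprK => h.
  have -> : m + t%:C *: x0 = t%:C *: (x0 + t^-1%:C *: m).
    by rewrite scalerDr sKr ?gt_eqF // addrC.
  rewrite hb_pZr; last exact: ltW.
  by apply: ler_wpM2l; first exact: ltW.
Qed.

Lemma Good_ext A x1 : Good A -> ~ (exists a, A (x1, a)) ->
  exists B, Good B /\ A `<` B.
Proof.
move=> gA nA; have A00 := Good00 gA; case: (gA) => hG hD hZ hS hP.
pose S := [set s | exists w b, A (w, b) /\ s = b - p (w - x1)].
have ub : forall w b u a, A (w, b) -> A (u, a) -> b - p (w - x1) <= p (u + x1) - a.
  move=> w b u a hw hu.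
  have h1 := hP _ _ (hD _ _ _ _ hw hu).
  have h2 := hpD (w - x1) (u + x1).
  rewrite addrACA addNr addr0 in h2.
  lra.
have S0 : S !=set0 by exists (0 - p (0 - x1)), 0, 0.
have hc1 : forall w b, A (w, b) -> b - p (w - x1) <= sup S.
  move=> w b hw; apply: ub_le_sup; last by exists w, b.
  exists (p (0 + x1) - 0) => s [w' [b' [hw' ->]]]; exact: ub.
have hc2 : forall u a, A (u, a) -> sup S <= p (u + x1) - a.
  move=> u a hu; apply: ge_sup => // s [w' [b' [hw' ->]]]; exact: ub.
set c := sup S in hc1 hc2.
pose B := [set q | exists u a t, A (u, a) /\ q = (u + t%:C *: x1, a + t * c)].
exists B; split; last first.
  split.
    move=> [u a] hu; exists u, a, 0; split => //.
    by rewrite scale0r mul0r !addr0.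
  move=> hBA; apply: nA; exists c; apply: hBA; exists 0, 0, 1; split => //.
  by rewrite add0r scale1r add0r mul1r.
split.
- move=> m t Mm; exists (m + t%:C *: x0), (t * delta), 0; split; first exact: hG.
  by rewrite scale0r addr0 mul0r addr0.
- move=> w a1 w' b1 [u [a [t [hu /pair_equal_spec [-> ->]]]]]
    [v [b [s [hv /pair_equal_spec [-> ->]]]]].
  exists (u + v), (a + b), (t + s); split; first exact: hD.
  congr pair; first by rewrite -sDr addrACA.
  ring.
- move=> r w a1 [u [a [t [hu /pair_equal_spec [-> ->]]]]].
  exists (r%:C *: u), (r * a), (r * t); split; first exact: hZ.
  congr pair; first by rewrite scalerDr sMr.
  ring.
- move=> w a1 a2 [u [a [t [hu /pair_equal_spec [-> ->]]]]]
    [v [b [s [hv /pair_equal_spec [e ->]]]]].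
  have [ets|nts] := eqVneq t s.
    subst s; move/addIr: e => e; subst v.
    by rewrite (hS _ _ _ hu hv).
  exfalso; apply: nA.
  have e2 : (t - s)%:C *: x1 = v - u.
    by rewrite rmorphB scalerBl -[t%:C *: x1](addKr u) e addrA addrK addrC.
  exists ((t - s)^-1 * (b - a)).
  have := hZ ((t - s)^-1) _ _ (GoodB gA hv hu).
  by rewrite -e2 sMr mulVf ?subr_eq0 // scale1r.
- move=> w a1 [u [a [t [hu /pair_equal_spec [-> ->]]]]].
  have [t0|[t0|t0]] : t = 0 \/ 0 < t \/ t < 0.
      by case: (ltrgtP t 0); auto.
  + by subst t; rewrite scale0r mul0r !addr0; exact: hP.
  + have := hc2 _ _ (hZ (t^-1) _ _ hu) => h.
    have -> : u + t%:C *: x1 = t%:C *: (t^-1%:C *: u + x1).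
      by rewrite scalerDr sKr ?gt_eqF.
    rewrite hb_pZr; last exact: ltW.
    set P := p _ in h *.
    have h3 : t * c <= t * (P - t^-1 * a) by apply: ler_wpM2l; [exact: ltW|].
    have h4 : t * (P - t^-1 * a) = t * P - a.
      by rewrite mulrBr mulrA mulfV ?gt_eqF // mul1r.
    lra.
  + have t0' : 0 < - t by rewrite oppr_gt0.
    have := hc1 _ _ (hZ ((- t)^-1) _ _ hu) => h.
    have -> : u + t%:C *: x1 = (- t)%:C *: ((- t)^-1%:C *: u - x1).
      by rewrite scalerDr sKr ?gt_eqF // scalerN rmorphN scaleNr opprK.
    rewrite hb_pZr; last exact: ltW.
    set P := p _ in h *.
    have h3 : (- t) * ((- t)^-1 * a - P) <= (- t) * c by apply: ler_wpM2l; [exact: ltW|].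
    have h4 : (- t) * ((- t)^-1 * a - P) = a - (- t) * P.
      by rewrite mulrBr mulrA mulfV ?gt_eqF // mul1r.
    lra.
Qed.

Lemma HBreal : exists g : V -> R,
  [/\ (forall u v, g (u + v) = g u + g v),
      (forall r u, g (r%:C *: u) = r * g u),
      (forall u, g u <= p u),
      (forall m, M m -> g m = 0) & g x0 = delta].
Proof.
pose P := fun A : set (V * R) => A = set0 \/ Good A.
have [A [PA maxA]] : exists A, P A /\ forall B, A `<` B -> ~ P B.
  apply: Zorn_bigcup => Fm FP Ftot.
  case: (pselect (exists q, (\bigcup_(Y in Fm) Y) q)) => [[q [Y0 FY0 Y0q]]|nq]; last first.
    left; apply/seteqP; split => q // hq; exfalso; apply: nq; by exists q.
  right.
  have Fg : forall Y, Fm Y -> forall q, Y q -> Good Y.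
    move=> Y FY q' Yq; case: (FP _ FY) => // e; by rewrite e in Yq.
  have gY0 := Fg _ FY0 _ Y0q.
  split.
  - move=> m t Mm; exists Y0 => //; by case: gY0 => h _ _ _ _; apply: h.
  - move=> u a v b [Y1 FY1 h1] [Y2 FY2 h2].
    case: (Ftot _ _ FY1 FY2) => s12.
      exists Y2 => //; case: (Fg _ FY2 _ h2) => _ h _ _ _; exact: h (s12 _ h1) h2.
    exists Y1 => //; case: (Fg _ FY1 _ h1) => _ h _ _ _; exact: h h1 (s12 _ h2).
  - move=> r u a [Y1 FY1 h1]; exists Y1 => //.
    case: (Fg _ FY1 _ h1) => _ _ h _ _; exact: h.
  - move=> u a b [Y1 FY1 h1] [Y2 FY2 h2].
    case: (Ftot _ _ FY1 FY2) => s12.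
      case: (Fg _ FY2 _ h2) => _ _ _ h _; exact: h (s12 _ h1) h2.
    case: (Fg _ FY1 _ h1) => _ _ _ h _; exact: h h1 (s12 _ h2).
  - move=> u a [Y1 FY1 h1]; case: (Fg _ FY1 _ h1) => _ _ _ _ h; exact: h.
have gA : Good A.
  case: PA => // eA; exfalso; apply: (maxA G0); last by right; exact: Good_G0.
  rewrite eA; split => // hs; have := hs _ (Good00 Good_G0); done.
have tot : forall v, exists a, A (v, a).
  move=> v; apply: contrapT => nv.
  have [B [gB AB]] := Good_ext gA nv.
  by apply: (maxA B AB); right.
have [g hg] := choice tot.
case: gA => hG hD hZ hS hP.
exists g; split.
- by move=> u v; apply: hS (hg (u + v)) (hD _ _ _ _ (hg u) (hg v)).
- by move=> r u; apply: hS (hg _) (hZ r _ _ (hg u)).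
- by move=> u; apply: hP (hg u).
- move=> m Mm; apply: hS (hg m) _.
  have := hG m 0 Mm; by rewrite scale0r addr0 mul0r.
- apply: hS (hg x0) _.
  have := hG 0 1 M0; by rewrite scale1r add0r mul1r.
Qed.

Lemma HBcomplex : exists L : V -> R[i],
  [/\ (forall c u v, L (c *: u + v) = c * L u + L v),
      (forall m, M m -> L m = 0),
      complex.Re (L x0) = delta &
      (forall v, `|L v| <= (p v)%:C)].
Proof.
have [g [gD gZ gP gM gx]] := HBreal.
pose L v := (g v)%:C - 'i * (g ('i *: v))%:C.
have ReL : forall w, complex.Re (L w) = g w.
  by move=> w; rewrite /L; simpc.
have LD : forall u v, L (u + v) = L u + L v.
  move=> u v; rewrite /L scalerDr !gD !rmorphD /=.
  by rewrite mulrDr opprD addrACA.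
have LR : forall (r : R) u, L (r%:C *: u) = r%:C * L u.
  move=> r u; rewrite /L scalerA [_ * r%:C]mulrC -scalerA !gZ !rmorphM /=.
  by rewrite mulrBr mulrCA.
have Li : forall u, L ('i *: u) = 'i * L u.
  move=> u; rewrite /L scalerA.
  have -> : ('i * 'i : R[i]) = (-1)%:C by rewrite -expr2 sqr_i rmorphN rmorph1.
  rewrite gZ mulN1r rmorphN /= mulrBr mulrA.
  have -> : ('i * 'i : R[i]) = -1 by rewrite -expr2 sqr_i.
  by rewrite mulN1r opprK mulrN opprK addrC.
have LZ : forall c u, L (c *: u) = c * L u.
  move=> c u; rewrite [c]complexE scalerDl LD LR.
  have -> : ('i%C * (complex.Im c)%:C) *: u = 'i *: ((complex.Im c)%:C *: u).
    by rewrite scalerA.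
  by rewrite Li LR mulrDl mulrA.
exists L; split.
- by move=> c u v; rewrite LD LZ.
- move=> m Mm; rewrite /L gM // gM; last exact: MZ.
  by rewrite mulr0 subr0.
- by rewrite ReL.
- move=> v.
  have [z0|nz] := eqVneq (L v) 0.
    by rewrite z0 normr0 ler0c hb_pge0.
  pose c := `|L v| / L v.
  have nc : `|c| = 1.
    by rewrite /c normrM normfV normr_id mulfV // normr_eq0.
  have e1 : c * L v = `|L v| by rewrite /c mulfVK.
  have e2 : `|L v| = (g (c *: v))%:C.
    rewrite -ReL LZ e1 RRe_real //; exact: normr_real.
  rewrite e2 lecR; apply: (le_trans (gP _)).
  have -> : p (c *: v) = p v by apply: complexI; rewrite hpZ nc mul1r.
  done.
Qed.

End HBr.

Section Tools.
Variable R : realType.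

Lemma closure_ball (Y : pseudoMetricType R[i]) (A : set Y) y :
  closure A y <-> forall e : R, 0 < e -> exists a, A a /\ ball y (e%:C) a.
Proof.
split.
  move=> cA e e0; have e0' : (0 : R[i]) < e%:C by rewrite ltcR.
  have [a [Aa ba]] := cA _ (nbhsx_ballx y _ e0'); by exists a.
move=> h B /nbhs_ballP [e' /= e'0 sB].
have e'r : e' = (complex.Re e')%:C by rewrite RRe_real // gtr0_real.
have : 0 < complex.Re e'.
  by move: e'0; rewrite ltcE => /andP [].
move=> /h [a [Aa ba]]; exists a; split => //; apply: sB; by rewrite e'r.
Qed.

Variable X : completeNormedModType R[i].

Definition nX (x : X) : R := complex.Re `|x|.
Definition nC (z : R[i]) : R := complex.Re `|z|.

Lemma normXE x : `|x| = (nX x)%:C.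
Proof. by rewrite /nX RRe_real // normr_real. Qed.

Lemma normCE z : `|z| = (nC z)%:C.
Proof. by rewrite /nC RRe_real // normr_real. Qed.

Lemma nX_ge0 x : 0 <= nX x.
Proof. by rewrite -ler0c -normXE normr_ge0. Qed.

Lemma nC_ge0 z : 0 <= nC z.
Proof. by rewrite -ler0c -normCE normr_ge0. Qed.

Lemma nXD x y : nX (x + y) <= nX x + nX y.
Proof. by rewrite -lecR rmorphD /= -!normXE ler_normD. Qed.

Lemma nCD x y : nC (x + y) <= nC x + nC y.
Proof. by rewrite -lecR rmorphD /= -!normCE ler_normD. Qed.

Lemma nXZ c x : (nX (c *: x))%:C = `|c| * (nX x)%:C.
Proof. by rewrite -!normXE normrZ. Qed.

Lemma nXZC c x : nX (c *: x) = nC c * nX x.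
Proof. by apply: complexI; rewrite nXZ rmorphM /= -normCE. Qed.

Lemma nCM a b : nC (a * b) = nC a * nC b.
Proof. by apply: complexI; rewrite rmorphM /= -!normCE normrM. Qed.

Lemma nXN x : nX (- x) = nX x.
Proof. by rewrite /nX normrN. Qed.

Lemma nCN x : nC (- x) = nC x.
Proof. by rewrite /nC normrN. Qed.

Lemma nX0 : nX 0 = 0.
Proof. by rewrite /nX normr0. Qed.

Lemma nC0 : nC 0 = 0.
Proof. by rewrite /nC normr0. Qed.

Lemma nC1 : nC 1 = 1.
Proof. by rewrite /nC normr1. Qed.

Lemma nX_eq0 x : nX x = 0 -> x = 0.
Proof. by move=> h; apply/normr0_eq0; rewrite normXE h. Qed.

Lemma nC_eq0 x : nC x = 0 -> x = 0.
Proof. by move=> h; apply/normr0_eq0; rewrite normCE h. Qed.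

Lemma nXB x y : nX (x - y) = nX (y - x).
Proof. by rewrite /nX distrC. Qed.

Lemma ltX x (e : R) : (`|x| < e%:C) = (nX x < e).
Proof. by rewrite normXE ltcR. Qed.

Lemma ReC_le z : complex.Re z <= nC z.
Proof.
rewrite /nC normc_def /=.
apply: (le_trans (ler_norm _)).
rewrite -sqrtr_sqr; apply: ler_wsqrtr.
by rewrite lerDl sqr_ge0.
Qed.

Lemma closureX (A : set X) x :
  closure A x <-> forall e : R, 0 < e -> exists a, A a /\ nX (x - a) < e.
Proof.
rewrite closure_ball; split => h e e0; have [a [Aa ba]] := h e e0; exists a;
  split => //; move: ba; by rewrite -ball_normE /= ltX.
Qed.

Lemma closureXX (A : set (X * X)) x y :
  closure A (x, y) <-> forall e : R, 0 < e ->
    exists a b, A (a, b) /\ nX (x - a) < e /\ nX (y - b) < e.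
Proof.
rewrite closure_ball; split => h e e0; have [] := h e e0.
  move=> [a b] [Aab [ba bb]]; exists a, b; split => //.
  by move: ba bb; rewrite -!ball_normE /= !ltX.
move=> a [b [Aab [ba bb]]]; exists (a, b); split => //.
by split; rewrite -ball_normE /= ltX.
Qed.

Lemma dnlP (x' : X -> R[i]) c :
  dual_norm_le x' c <-> forall x, nC (x' x) <= c * nX x.
Proof.
split => h x; have := h x; by rewrite normCE normXE -rmorphM lecR.
Qed.

End Tools.

Lemma arith1 (R : realType) (e K : R) : 0 <= K -> 2 * (e / (2 * (K + 1))) * (K + 1) = e.
Proof. move=> K0; field; lra. Qed.

Lemma arith2 (R : realType) (e K : R) : 0 <= K -> e / (K + 1) * (K + 1) = e.
Proof. move=> K0; field; lra. Qed.

Lemma nXtri (R : realType) (X : completeNormedModType R[i]) (a b : X) :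
  nX a <= nX b + nX (b - a).
Proof. by have := nXD b (- (b - a)); rewrite nXN opprB addrC subrK. Qed.

Section Lin.
Variable R : realType.
Variable X : completeNormedModType R[i].
Variable G : set (X * X).
Hypothesis hG : linear_op G.

Lemma lin0 : G (0, 0). Proof. by case: hG. Qed.
Lemma linD x y u v : G (x, y) -> G (u, v) -> G (x + u, y + v).
Proof. by case: hG => _ h _ _; apply: h. Qed.
Lemma linZ c x y : G (x, y) -> G (c *: x, c *: y).
Proof. by case: hG => _ _ h _; apply: h. Qed.
Lemma linS x y z : G (x, y) -> G (x, z) -> y = z.
Proof. by case: hG => _ _ _ h; apply: h. Qed.
Lemma linN x y : G (x, y) -> G (- x, - y).
Proof. by move=> h; have := linZ (-1) h; rewrite !scaleN1r. Qed.
Lemma linB x y u v : G (x, y) -> G (u, v) -> G (x - u, y - v).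
Proof. by move=> h1 h2; apply: linD h1 (linN h2). Qed.

Lemma ext_bounded (D : set X) (K : R) :
  closed G -> closure D = setT -> D `<=` op_dom G -> 0 <= K ->
  (forall a b, D a -> D b -> D (a - b)) ->
  (forall d z, D d -> G (d, z) -> nX z <= K * nX d) ->
  bounded_op G.
Proof.
move=> cG dD Ddom K0 DB hK.
have dens : forall x (r : R), 0 < r -> exists d z, D d /\ G (d, z) /\ nX (x - d) < r.
  move=> x r r0.
  have : closure D x by rewrite dD.
  move=> /closureX /(_ r r0) [d [Dd hd]].
  have [z Gz] := Ddom _ Dd; by exists d, z.
have step1 : forall x, exists y, G (x, y) /\ nX y <= K * nX x.
  move=> x.
  pose B := fun r : R => [set z | exists d, D d /\ nX (x - d) < r /\ G (d, z)].
  pose Fx := filter_from [set r : R | 0 < r] B.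
  have FF : Filter Fx.
    apply: filter_from_filter; first by exists 1; rewrite /= ltr01.
    move=> i j i0 j0; exists (Order.min i j); first by rewrite /= lt_min i0 j0.
    move=> z [d [Dd [hd Gd]]]; move: hd; rewrite lt_min => /andP [hi hj].
    by split; exists d.
  have PF : ProperFilter Fx.
    apply: filter_from_proper => r r0.
    have [d [z [Dd [Gz hd]]]] := dens x r r0; exists z; exists d; done.
  have cF : cauchy Fx.
    apply: cauchy_exP => eps eps0.
    have epsr : eps = (complex.Re eps)%:C by rewrite RRe_real // gtr0_real.
    have e0 : 0 < complex.Re eps by move: eps0; rewrite ltcE => /andP [].
    set e := complex.Re eps in epsr e0.
    pose r := e / (2 * (K + 1)).
    have r0 : 0 < r by rewrite /r divr_gt0 // mulr_gt0 // ltr_wpDl.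
    have hr : K * (2 * r) < e.
      have := arith1 e K0; rewrite -/r => h; lra.
    have [d0 [z0 [Dd0 [Gz0 hd0]]]] := dens x r r0.
    exists z0; exists r => // z [d [Dd [hd Gd]]].
    rewrite epsr -ball_normE /= ltX.
    have := hK _ _ (DB _ _ Dd0 Dd) (linB Gz0 Gd) => h1.
    have h2 : nX (d0 - d) <= nX (x - d0) + nX (x - d).
      have -> : d0 - d = - (x - d0) + (x - d).
        by rewrite opprB addrA subrK.
      by apply: (le_trans (nXD _ _)); rewrite nXN.
    have h3 : K * nX (d0 - d) <= K * (2 * r).
      apply: ler_wpM2l => //; lra.
    lra.
  have hy : cvg Fx by apply: cauchy_cvg.
  set y := lim Fx in hy.
  have approx : forall eps : R, 0 < eps ->
      exists d z, D d /\ G (d, z) /\ nX (x - d) < eps /\ nX (y - z) < eps.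
    move=> eps eps0.
    have eps0' : (0 : R[i]) < eps%:C by rewrite ltcR.
    have [r /= r0 sB] := hy _ (nbhsx_ballx y _ eps0').
    have m0 : 0 < Order.min r eps by rewrite lt_min r0 eps0.
    have [d [z [Dd [Gz hd]]]] := dens x _ m0.
    move: hd; rewrite lt_min => /andP [hr he].
    have : ball y eps%:C z by apply: sB; exists d.
    rewrite -ball_normE /= ltX => hz.
    by exists d, z.
  exists y; split.
    rewrite ((closure_id G).1 cG); apply/closureXX => e e0.
    have [d [z [Dd [Gz [h1 h2]]]]] := approx e e0; by exists d, z.
  apply/ler_addgt0Pr => e e0.
  have ee0 : 0 < e / (K + 1) by rewrite divr_gt0 // ltr_wpDl.
  have [d [z [Dd [Gz [h1 h2]]]]] := approx _ ee0.
  have t1 : nX y <= nX z + nX (y - z).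
    by rewrite nXB; apply: nXtri.
  have t2 : nX d <= nX x + nX (x - d).
    exact: nXtri.
  have t3 := hK _ _ Dd Gz.
  have t4 : K * nX d <= K * (nX x + e / (K + 1)).
    apply: ler_wpM2l => //; lra.
  have := arith2 e K0; set q := e / (K + 1) in ee0 h1 h2 t4 * => t5.
  lra.
have [T hT] := choice step1.
split => //.
  by apply/seteqP; split => // x _; exists (T x); case: (hT x).
exists K => x y Gxy.
have <- := linS (hT x).1 Gxy.
by rewrite !normXE -rmorphM lecR; case: (hT x).
Qed.

End Lin.

Section Span.
Variable R : realType.
Variable X : completeNormedModType R[i].

Lemma span_sub (S : set X) : S `<=` span S.
Proof.
move=> x Sx; exists [:: (1, x)]; split; last by rewrite big_seq1 scale1r.
by move=> q; rewrite inE => /eqP ->.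
Qed.

Lemma span0 (S : set X) : span S 0.
Proof. by exists [::]; split => //; rewrite big_nil. Qed.

Lemma spanD (S : set X) u v : span S u -> span S v -> span S (u + v).
Proof.
move=> [s1 [h1 ->]] [s2 [h2 ->]]; exists (s1 ++ s2); split; last by rewrite big_cat.
by move=> q; rewrite mem_cat => /orP [] ?; [apply: h1 | apply: h2].
Qed.

Lemma spanZ (S : set X) c u : span S u -> span S (c *: u).
Proof.
move=> [s [h ->]]; exists [seq (c * q.1, q.2) | q <- s]; split.
  by move=> q /mapP [q' q's ->] /=; apply: h.
rewrite big_map scaler_sumr; apply: eq_bigr => q _; by rewrite scalerA.
Qed.

Lemma spanB (S : set X) u v : span S u -> span S v -> span S (u - v).
Proof. by move=> hu hv; apply: spanD hu _; rewrite -scaleN1r; apply: spanZ. Qed.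

Lemma span_ind (S Q : set X) : Q 0 -> (forall u v, Q u -> Q v -> Q (u + v)) ->
  (forall c u, Q u -> Q (c *: u)) -> S `<=` Q -> span S `<=` Q.
Proof.
move=> Q0 QD QZ SQ v [s [hs ->]]; elim: s hs => [|q s IH] hs; first by rewrite big_nil.
rewrite big_cons; apply: QD.
  by apply: QZ; apply: SQ; apply: hs; rewrite inE eqxx.
by apply: IH => p ps; apply: hs; rewrite inE ps orbT.
Qed.

Lemma dualp0 (x' : X -> R[i]) : dualp x' -> x' 0 = 0.
Proof.
move=> [hl _]; have := hl 1 0 0; rewrite scale1r addr0 mul1r => h.
by apply: (@addrI _ (x' 0)); rewrite addr0 -h.
Qed.

Lemma dualpD (x' : X -> R[i]) u v : dualp x' -> x' (u + v) = x' u + x' v.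
Proof. by move=> [hl _]; have := hl 1 u v; rewrite scale1r mul1r. Qed.

Lemma dualpZ (x' : X -> R[i]) c u : dualp x' -> x' (c *: u) = c * x' u.
Proof.
move=> hx; have := hx.1 c u 0; by rewrite !addr0 (dualp0 hx) addr0.
Qed.

Lemma dualpB (x' : X -> R[i]) u v : dualp x' -> x' (u - v) = x' u - x' v.
Proof. by move=> hx; rewrite dualpD // -scaleN1r dualpZ // mulN1r. Qed.

Lemma dual_bound (x' : X -> R[i]) : dualp x' ->
  exists c, 0 <= c /\ forall x, nC (x' x) <= c * nX x.
Proof.
move=> [_ [c /dnlP hc]]; exists (Order.max c 0); split; first by rewrite le_max lexx orbT.
move=> x; apply: (le_trans (hc x)); apply: ler_wpM2r; first exact: nX_ge0.
by rewrite le_max lexx.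
Qed.

Lemma dualp_mk (x' : X -> R[i]) c :
  (forall (a : R[i]) x y, x' (a *: x + y) = a * x' x + x' y) ->
  (forall x, nC (x' x) <= c * nX x) -> dualp x'.
Proof. by move=> hl hb; split => //; exists c; apply/dnlP. Qed.

End Span.

Section Span2.
Variable R : realType.
Variable X : completeNormedModType R[i].

Lemma dualp_comb (x' u' : X -> R[i]) c : dualp x' -> dualp u' ->
  dualp (fun x => c * x' x + u' x).
Proof.
move=> hx hu; have [c1 [c10 hc1]] := dual_bound hx; have [c2 [c20 hc2]] := dual_bound hu.
apply: (@dualp_mk _ _ _ (nC c * c1 + c2)).
  move=> a w z; rewrite !dualpD // !dualpZ //; ring.
move=> w; apply: (le_trans (nCD _ _)); rewrite nCM.
have h1 : nC c * nC (x' w) <= nC c * (c1 * nX w) by apply: ler_wpM2l; [exact: nC_ge0|].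
have := hc2 w; have := nC_ge0 c; lra.
Qed.

Lemma dualpNf (x' : X -> R[i]) : dualp x' -> dualp (fun x => - x' x).
Proof.
move=> hx; have := @dualp_comb x' (fun _ => 0) (-1) hx.
have h0 : dualp (fun _ : X => (0 : R[i])).
  by apply: (@dualp_mk _ _ _ 0) => [a w z|w]; rewrite ?mulr0 ?addr0 ?mul0r ?nC0.
move=> /(_ h0); congr dualp; apply: funext => x; by rewrite addr0 mulN1r.
Qed.

Lemma norming (v : X) : exists L : X -> R[i],
  [/\ dualp L, dual_norm_le L 1 & nX v <= complex.Re (L v)].
Proof.
have [v0|nv] := eqVneq v 0.
  exists (fun _ => 0); split.
  - by apply: (@dualp_mk _ _ _ 0) => [a w z|w]; rewrite ?mulr0 ?addr0 ?mul0r ?nC0.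
  - by apply/dnlP => x; rewrite nC0 mul1r nX_ge0.
  - by rewrite v0 nX0.
have d0 : 0 < nX v.
  rewrite lt0r nX_ge0 andbT; apply/eqP => h; move/eqP: nv; apply; exact: nX_eq0.
have hd : forall m : X, [set w : X | w = 0] m -> nX v <= nX (v - m).
  by move=> m /= ->; rewrite subr0.
have [L [LL LM LRe Lb]] := @HBcomplex R X (@nX R X) (@nXD R X) (@nXZ R X)
  [set w | w = 0] erefl (fun u w hu hw => etrans (congr2 _ hu hw) (addr0 0))
  (fun c u hu => etrans (congr1 _ hu) (scaler0 _ c)) v (nX v) d0 hd.
exists L; split.
- apply: (@dualp_mk _ _ _ 1) => // w; rewrite mul1r -lecR -normCE; exact: Lb.
- apply/dnlP => w; rewrite mul1r -lecR -normCE; exact: Lb.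
- by rewrite LRe.
Qed.

End Span2.

Section Main.
Variable R : realType.
Variable X : completeNormedModType R[i].
Variable F : algType R[i].
Variable Phi : F -> set (X * X).
Hypothesis hPhi : proto_calculus Phi.
Variable f : F.
Hypothesis hf : Fdual Phi f.

Let G := Phi f.
Let Gen := [set y | exists x e, Bset Phi e /\ Bset Phi (f * e) /\ Phi e (x, y)].
Let D := Dset Phi f.

Lemma linPhi g : linear_op (Phi g).
Proof. by case: hPhi => hcl _; case: (hcl g). Qed.

Lemma hGlin : linear_op G.
Proof. exact: linPhi. Qed.

Lemma hGcl : closed G.
Proof. by case: hPhi => hcl _; case: (hcl f). Qed.

Lemma DE : D = span Gen.
Proof. by []. Qed.

Lemma gen_graph e x y u : Bset Phi e -> Bset Phi (f * e) ->
  Phi e (x, y) -> Phi (f * e) (x, u) -> G (y, u).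
Proof.
move=> Be Bfe hy hu.
case: hPhi => _ [_ [_ [_ [hmul hdom]]]].
have [z Gz] := hdom f e x y hy (ex_intro _ u hu).
have hz := hmul f e x y z hy Gz.
by rewrite -(linS (linPhi (f * e)) hz hu).
Qed.

Lemma Gen_dom : Gen `<=` op_dom G.
Proof.
move=> y [x [e [Be [Bfe hy]]]].
have [_ domfe _] : bounded_op (Phi (f * e)) := Bfe.
have : op_dom (Phi (f * e)) x by rewrite domfe.
move=> [u hu]; exists u; exact: gen_graph hu.
Qed.

Lemma dom_sub : op_dom G 0 /\ (forall u v, op_dom G u -> op_dom G v -> op_dom G (u + v))
  /\ (forall c u, op_dom G u -> op_dom G (c *: u)).
Proof.
split; first by exists 0; exact: (lin0 hGlin).
split; first by move=> u v [a ha] [b hb]; exists (a + b); move: (linD hGlin ha hb).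
by move=> c u [a ha]; exists (c *: a); exact: (linZ hGlin c ha).
Qed.

Lemma D_dom : D `<=` op_dom G.
Proof.
case: dom_sub => h0 [hD hZ]; rewrite DE; apply: span_ind => //; exact: Gen_dom.
Qed.

Lemma D0 : D 0. Proof. exact: span0. Qed.
Lemma DD u v : D u -> D v -> D (u + v). Proof. exact: spanD. Qed.
Lemma DZ c u : D u -> D (c *: u). Proof. exact: spanZ. Qed.
Lemma DB u v : D u -> D v -> D (u - v). Proof. exact: spanB. Qed.
Lemma Gen_D : Gen `<=` D. Proof. exact: span_sub. Qed.

Lemma pd_iff x' y' : Phi_dual Phi f (x', y') <->
  [/\ dualp x', dualp y' & forall d z, D d -> G (d, z) -> x' z = y' d].
Proof.
split.
  move=> [/= hx [hy hrel]]; split => //.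
  suff : D `<=` [set d | op_dom G d /\ forall z, G (d, z) -> x' z = y' d].
    by move=> h d z Dd Gz; apply: (h d Dd).2.
  rewrite DE; apply: span_ind.
  - split; first by exists 0; exact: (lin0 hGlin).
    move=> z Gz; rewrite -(linS hGlin (lin0 hGlin) Gz) !dualp0 //.
  - move=> u v [[a ha] hu] [[b hb] hv]; split; first by exists (a + b); exact: (linD hGlin ha hb).
    move=> z Gz; rewrite -(linS hGlin (linD hGlin ha hb) Gz) !dualpD // hu // hv //.
  - move=> c u [[a ha] hu]; split; first by exists (c *: a); exact: (linZ hGlin c ha).
    move=> z Gz; rewrite -(linS hGlin (linZ hGlin c ha) Gz) !dualpZ // hu //.
  - move=> y hGy; split; first exact: Gen_dom.
    move: hGy => [x [e [Be [Bfe hxy]]]] z Gz.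
    have [_ domfe _] : bounded_op (Phi (f * e)) := Bfe.
    have : op_dom (Phi (f * e)) x by rewrite domfe.
    move=> [u hu].
    rewrite -(linS hGlin (gen_graph Be Bfe hxy hu) Gz).
    exact: hrel e Be Bfe x u y hu hxy.
move=> [hx hy hrel]; split => //; split => // e Be Bfe x u v hu hv.
apply: hrel; first by apply: Gen_D; exists x, e.
exact: gen_graph hv hu.
Qed.

Lemma adj_sub : adjoint G `<=` Phi_dual Phi f.
Proof.
move=> [x' y'] [/= hx [hy hrel]]; apply/pd_iff; split => // d z _ Gz; exact: hrel.
Qed.


Lemma B1 : Bset Phi 1.
Proof.
case: hPhi => _ [h1 _]; rewrite /Bset /= h1; split.
- split => //=.
  + by move=> x y u v -> ->.
  + by move=> c x y ->.
  + by move=> x y z -> ->.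
- by apply/seteqP; split => // x _; exists x.
- by exists 1 => x y /= ->; rewrite rmorph1 mul1r.
Qed.

Lemma neg_closure_X (A : set X) x : ~ closure A x ->
  exists e, 0 < e /\ forall a, A a -> e <= nX (x - a).
Proof.
move=> nc; apply: contrapT => nE; apply: nc; apply/closureX => e e0.
apply: contrapT => nA; apply: nE; exists e; split => // a Aa.
rewrite leNgt; apply/negP => lt; apply: nA; by exists a.
Qed.

Lemma Ddense : closure D = setT.
Proof.
apply/seteqP; split => // x0 _; apply: contrapT => nc.
have [e [e0 he]] := neg_closure_X nc.
have [L [LL LM LRe Lb]] := @HBcomplex R X (@nX R X) (@nXD R X) (@nXZ R X)
  D D0 DD DZ x0 e e0 he.
have dL : dualp L.
  apply: (@dualp_mk _ _ _ 1) => // w; rewrite mul1r -lecR -normCE; exact: Lb.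
have [_ hk] := hf B1.
have := hk L _ x0.
  move=> /(_ _) L0; suff : L x0 = 0.
    by move=> h; move: LRe; rewrite h /= => h'; rewrite -h' ltxx in e0.
  apply: L0 => e' Be' Bfe'; split => // x y hxy; apply: LM; apply: Gen_D.
  by exists x, e'; rewrite mulr1 in Bfe'.
Qed.

Lemma dom_dense : closure (op_dom G) = setT.
Proof.
apply/seteqP; split => // x _.
have : closure D x by rewrite Ddense.
by move=> h; exact: (closureS D_dom h).
Qed.

Lemma core_eq : core D G -> Phi_dual Phi f `<=` adjoint G.
Proof.
move=> [_ hcl] [x' y'] /pd_iff [hx hy hrel]; split => //; split => // x y Gxy /=.
have cH : closure [set p | G p /\ D p.1] (x, y) by rewrite hcl.
apply: contrapT => ne.
have [c1 [c10 hc1]] := dual_bound hx; have [c2 [c20 hc2]] := dual_bound hy.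
set eta := nC (x' y - y' x).
have eta0 : 0 < eta.
  rewrite lt0r nC_ge0 andbT; apply/eqP => h; apply: ne; apply/eqP; rewrite -subr_eq0.
  by apply/eqP; apply: nC_eq0.
have K0 : 0 <= c1 + c2 by lra.
have eps0 : 0 < eta / (c1 + c2 + 1) by rewrite divr_gt0 // ltr_wpDl.
have [a [b [[Gab Da] [h1 h2]]]] := (closureXX _ _ _).1 cH _ eps0.
have rel := hrel a b Da Gab.
have e1 : x' y - y' x = x' (y - b) - y' (x - a).
  rewrite !dualpB // rel; ring.
have t1 : eta <= nC (x' (y - b)) + nC (y' (x - a)).
  by rewrite /eta e1; apply: (le_trans (nCD _ _)); rewrite nCN.
have t2 := hc1 (y - b); have t3 := hc2 (x - a).
have := arith2 eta K0; set q := eta / _ in eps0 h1 h2 * => t5.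
have t6 : c1 * nX (y - b) <= c1 * q by apply: ler_wpM2l => //; exact: ltW.
have t7 : c2 * nX (x - a) <= c2 * q by apply: ler_wpM2l => //; exact: ltW.
clear hcl e1 ne rel; lra.
Qed.

Lemma eq_core : adjoint G = Phi_dual Phi f -> core D G.
Proof.
move=> heq; split; first exact: D_dom.
apply/seteqP; split.
  rewrite {2}((closure_id G).1 hGcl) => q hq; exact: (closureS (fun r (hr : _ /\ _) => hr.1) hq).
move=> [x0 y0] Gxy; apply: contrapT => nc.
have [e [e0 he]] : exists e, 0 < e /\ forall a b, G (a, b) -> D a ->
    e <= nX (x0 - a) + nX (y0 - b).
  apply: contrapT => nE; apply: nc; apply/closureXX => e e0; apply: contrapT => nA.
  apply: nE; exists e; split => // a b Gab Da.
  rewrite leNgt; apply/negP => lt; apply: nA; exists a, b; split => //.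
  have := nX_ge0 (x0 - a); have := nX_ge0 (y0 - b); clear heq; lra.
pose p := fun q : (X * X)%type => nX q.1 + nX q.2.
have hpD : forall u v : (X * X)%type, p (u + v) <= p u + p v.
  move=> u v; rewrite /p /=; have := nXD u.1 v.1; have := nXD u.2 v.2; clear heq; lra.
have hpZ : forall (c : R[i]) (v : (X * X)%type), (p (c *: v))%:C = `|c| * (p v)%:C.
  by move=> c v; rewrite /p /= !rmorphD /= !nXZ mulrDr.
pose H := [set q : (X * X)%type | G q /\ D q.1].
have H0 : H 0 by split; [exact: (lin0 hGlin) | exact: D0].
have HD : forall u v, H u -> H v -> H (u + v).
  move=> [a b] [c d] [h1 h2] [h3 h4]; split; [exact: (linD hGlin h1 h3) | exact: DD].
have HZ : forall (c : R[i]) u, H u -> H (c *: u).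
  move=> c [a b] [h1 h2]; split; [exact: (linZ hGlin c h1) | exact: DZ].
have hd : forall m, H m -> e <= p ((x0, y0) - m).
  by move=> [a b] [h1 h2]; rewrite /p /=; apply: he.
have [L [LL LM LRe Lb]] := @HBcomplex R _ p hpD hpZ H H0 HD HZ (x0, y0) e e0 hd.
pose ph := fun a : X => L (a, 0).
pose ps := fun b : X => L (0, b).
have Lsplit : forall a b, L (a, b) = ph a + ps b.
  move=> a b; have -> : ((a, b) : (X * X)%type) = 1 *: ((a, 0) : (X * X)%type) + (0, b).
    by rewrite scale1r; apply/pair_equal_spec; split; rewrite /= ?addr0 ?add0r.
  by rewrite LL mul1r.
have dph : dualp ph.
  apply: (@dualp_mk _ _ _ 1).
    move=> c u v; rewrite /ph -LL; congr L.
    by apply/pair_equal_spec; split; rewrite /= ?scaler0 ?addr0.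
  move=> w; rewrite mul1r -lecR -normCE; have := Lb (w, 0); by rewrite /p /= nX0 addr0.
have dps : dualp ps.
  apply: (@dualp_mk _ _ _ 1).
    move=> c u v; rewrite /ps -LL; congr L.
    by apply/pair_equal_spec; split; rewrite /= ?scaler0 ?addr0.
  move=> w; rewrite mul1r -lecR -normCE; have := Lb (0, w); by rewrite /p /= nX0 add0r.
have hPD : Phi_dual Phi f (ps, fun a => - ph a).
  apply/pd_iff; split => //; first exact: dualpNf.
  move=> d z Dd Gz; have h0 : L (d, z) = 0 by apply: LM.
  rewrite Lsplit in h0; apply: (@addrI _ (ph d)); by rewrite h0 subrr.
rewrite -heq in hPD; case: hPD => _ [_ /= hr].
have := hr _ _ Gxy; move=> h.
have : L (x0, y0) = 0 by rewrite Lsplit h; exact: subrr.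
by move=> h'; move: LRe; rewrite h' /= => h''; rewrite -h'' ltxx in e0.
Qed.


Lemma Kbound (M : R) : (forall x y, G (x, y) -> `|y| <= M%:C * `|x|) ->
  forall x y, G (x, y) -> nX y <= Order.max M 0 * nX x.
Proof.
move=> hM x y Gxy; have := hM _ _ Gxy; rewrite !normXE -rmorphM lecR => h.
apply: (le_trans h); apply: ler_wpM2r; first exact: nX_ge0.
by rewrite le_max lexx.
Qed.

Lemma bounded_core : bounded_op G -> core D G.
Proof.
move=> [_ dom [M hM]]; split; first exact: D_dom.
have hK := Kbound hM; set K := Order.max M 0 in hK.
have K0 : 0 <= K by rewrite /K le_max lexx orbT.
apply/seteqP; split.
  rewrite {2}((closure_id G).1 hGcl) => q hq; exact: (closureS (fun r (hr : _ /\ _) => hr.1) hq).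
move=> [x y] Gxy; apply/closureXX => e e0.
have ee0 : 0 < e / (K + 1) by rewrite divr_gt0 // ltr_wpDl.
have : closure D x by rewrite Ddense.
move=> /closureX /(_ _ ee0) [d [Dd hd]].
have [z Gz] := D_dom Dd.
have t1 := hK _ _ (linB hGlin Gxy Gz).
have t2 : K * nX (x - d) <= K * (e / (K + 1)) by apply: ler_wpM2l => //; exact: ltW.
have := arith2 e K0; set q := e / _ in ee0 hd t2 * => t5.
have t6 : 0 <= K * q by apply: mulr_ge0 => //; exact: ltW.
exists d, z; split; first by split.
split; clear dom; lra.
Qed.

Lemma bounded_eq : bounded_op G -> Phi_dual Phi f = adjoint G.
Proof.
move=> bG; apply/seteqP; split; [exact: core_eq (bounded_core bG) | exact: adj_sub].
Qed.

Lemma bounded_dual : bounded_op G -> dual_bounded_op (Phi_dual Phi f).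
Proof.
move=> bG; rewrite bounded_eq //.
case: bG => _ dom [M hM].
have hK := Kbound hM; set K := Order.max M 0 in hK.
have K0 : 0 <= K by rewrite /K le_max lexx orbT.
have tot : forall x, exists y, G (x, y) by move=> x; have : op_dom G x by rewrite dom.
have [T hT] := choice tot.
have Tlin : forall (c : R[i]) u v, T (c *: u + v) = c *: T u + T v.
  move=> c u v; apply: (linS hGlin (hT _)); exact: (linD hGlin (linZ hGlin c (hT u)) (hT v)).
have Tdual : forall x', dualp x' -> dualp (fun u => x' (T u)).
  move=> x' hx; have [c1 [c10 hc1]] := dual_bound hx.
  apply: (@dualp_mk _ _ _ (c1 * K)).
    by move=> a u v; rewrite Tlin dualpD // dualpZ.
  move=> u; apply: (le_trans (hc1 _)); rewrite -mulrA; apply: ler_wpM2l => //.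
  exact: hK (hT u).
split.
- by move=> x' y' [hx [hy _]].
- move=> x' hx; exists (fun u => x' (T u)); split => //; split; first exact: Tdual.
  by move=> a b Gab /=; rewrite (linS hGlin Gab (hT a)).
- move=> x' y1 y2 [_ [_ /= h1]] [_ [_ /= h2]]; apply: funext => u.
  by rewrite -(h1 _ _ (hT u)) (h2 _ _ (hT u)).
- move=> x' y' u' v' c [hx [hy /= h1]] [hu [hv /= h2]]; split; first exact: dualp_comb.
  split; first exact: dualp_comb.
  by move=> a b Gab /=; rewrite (h1 _ _ Gab) (h2 _ _ Gab).
- exists K => x' y' c [hx [hy /= hrel]] /dnlP hc; apply/dnlP => u.
  rewrite -(hrel _ _ (hT u)).
  have [c0|c0] := lerP 0 c.
    apply: (le_trans (hc _)); rewrite [K * c]mulrC -mulrA; apply: ler_wpM2l => //.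
    exact: hK (hT u).
  have hu := hc u; have := nC_ge0 (x' u); have := nX_ge0 u => n0 nc0.
  have : nX u <= 0 by nra.
  move=> h; have u0 : u = 0 by apply: nX_eq0; apply/eqP; rewrite eq_le h nX_ge0.
  have T0 : T 0 = 0 by apply: (linS hGlin (hT 0)); exact: (lin0 hGlin).
  by rewrite u0 T0 dualp0 // nC0 nX0 mulr0.
Qed.

Lemma dual_bounded_G : dual_bounded_op (Phi_dual Phi f) -> bounded_op G.
Proof.
move=> [hcomp hdom hsv hlin [M hM]].
have K0 : 0 <= Order.max M 0 by rewrite le_max lexx orbT.
apply: (ext_bounded hGlin hGcl Ddense D_dom K0 DB).
move=> d z Dd Gz.
have [L [dL nL hLz]] := norming z.
have [y' hy'] := hdom L dL.
have [_ _ rel] := (pd_iff L y').1 hy'.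
have /dnlP hb := hM L y' 1 hy' nL.
apply: (le_trans hLz); apply: (le_trans (ReC_le _)); rewrite (rel _ _ Dd Gz).
apply: (le_trans (hb d)); rewrite mulr1; apply: ler_wpM2r; first exact: nX_ge0.
by rewrite le_max lexx.
Qed.

End Main.

Unset Implicit Arguments.
Local Close Scope complex_scope.

Theorem theorem8p1 (R : realType) (X : completeNormedModType R[i])
  (F : algType R[i]) (Phi : F -> set (X * X))
  (hPhi : proto_calculus Phi) (f : F) (hf : Fdual Phi f) :
  (* (a) *)
  (closure (Dset Phi f) = setT /\ Dset Phi f `<=` op_dom (Phi f)
     /\ closure (op_dom (Phi f)) = setT)
  (* (b) *)
  /\ (adjoint (Phi f) `<=` Phi_dual Phi f
      /\ (adjoint (Phi f) = Phi_dual Phi f <-> core (Dset Phi f) (Phi f)))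
  (* (c) *)
  /\ ((bounded_op (Phi f) <-> dual_bounded_op (Phi_dual Phi f))
      /\ (bounded_op (Phi f) -> Phi_dual Phi f = adjoint (Phi f))).
Proof.
split.
  split; first exact: (Ddense hPhi hf).
  split; first exact: (D_dom hPhi (f:=f)).
  exact: (dom_dense hPhi hf).
split.
  split; first exact: (adj_sub hPhi (f:=f)).
  split; first exact: (eq_core hPhi (f:=f)).
  move=> hc; apply/seteqP; split; [exact: (adj_sub hPhi (f:=f)) | exact: (core_eq hPhi hc)].
split; first split; first exact: (bounded_dual hPhi hf).
  exact: (dual_bounded_G hPhi hf).
exact: (bounded_eq hPhi hf).
Qed.
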